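(* Let $K, G_1, G_2$ be open graphs and let $e_1 : K \to G_1$, $e_2 : K \to G_2$ be open embeddings that are boundary-coherent. Let $M$ with maps $i_1 : G_1 \to M$, $i_2 : G_2 \to M$ be the pushout of $e_1$ and $e_2$ in $\mathbf{OGraph}$ (the merging of $G_1$ and $G_2$ on $K$). Then $i_1$ and $i_2$ are open embeddings.
   Context: A pre-open graph $G$ consists of a set $E_G$ of edges, two disjoint sets $V_G$ (vertices) and $\epsilon_G$ (edge points), and maps $s_G, t_G : E_G \to V_G \sqcup \epsilon_G$. A morphism consists of a map on edges and a map on points sending vertices to vertices and edge points to edge points, commuting with sources and targets. An open graph is a pre-open graph in which the restrictions of $s_G$ to $s_G^{-1}(\epsilon_G)$ and of $t_G$ to $t_G^{-1}(\epsilon_G)$ are injective; $\mathbf{OGraph}$ is the full subcategory of open graphs. An open embedding is a monomorphism $e: G\to H$ (injective on edges and points) which is full on vertices: whenever $e(p)$ is a vertex, every edge of $H$ with source or target $e(p)$ lies in the image of $e$. For an edge point $p$: it is an input if it has exactly one out-edge and no in-edges, an output if it has exactly one in-edge and no out-edges, isolated if it has neither; $\mathrm{Bound}(G)$ is the set of inputs and outputs and $\mathrm{Isol}(G)$ the set of isolated points. Arrows $f: G \to H_1$, $g : G \to H_2$ are boundary-coherent if (1) for all $p\in\mathrm{Bound}(G)$, $f(p)\notin \mathrm{Bound}(H_1)$ implies $g(p)\in\mathrm{Bound}(H_2)$, and (2) for all $p\in \mathrm{Isol}(G)$, either $f(p)$ is isolated, or $g(p)$ is isolated, or one of $f(p),g(p)$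 is an input and the other an output. (Such pushouts exist in $\mathbf{OGraph}$.) *)

(* Defs.v *)
Set Implicit Arguments.

(* A pre-open graph: edges E, vertices V, edge points P (disjoint: points are V + P),
   source and target maps E -> V + P. *)
Record pograph := POGraph {
  E : Type;
  V : Type;
  P : Type;
  src : E -> V + P;
  tgt : E -> V + P
}.

Definition map_pt {V1 P1 V2 P2 : Type} (fv : V1 -> V2) (fp : P1 -> P2)
  (x : V1 + P1) : V2 + P2 :=
  match x with inl v => inl (fv v) | inr p => inr (fp p) end.

Record pomorph (G H : pograph) := POMorph {
  fE : E G -> E H;
  fV : V G -> V H;
  fP : P G -> P H;
  fsrc : forall e, src H (fE e) = map_pt fV fP (src G e);
  ftgt : forall e, tgt H (fE e) = map_pt fV fP (tgt G e)
}.

Definition fpt {G H : pograph} (f : pomorph G H) : V G + P G -> V H + P H :=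
  map_pt (fV f) (fP f).

Definition comp {G H K : pograph} (g : pomorph H K) (f : pomorph G H) : pomorph G K.
Proof.
  refine (@POMorph G K (fun e => fE g (fE f e)) (fun v => fV g (fV f v))
                 (fun p => fP g (fP f p)) _ _).
  - intro e. rewrite (fsrc g), (fsrc f). destruct (src G e); reflexivity.
  - intro e. rewrite (ftgt g), (ftgt f). destruct (tgt G e); reflexivity.
Defined.

Definition meq {G H : pograph} (f g : pomorph G H) : Prop :=
  (forall e, fE f e = fE g e) /\ (forall v, fV f v = fV g v) /\
  (forall p, fP f p = fP g p).

Definition is_open (G : pograph) : Prop :=
  (forall e1 e2 p, src G e1 = inr p -> src G e2 = inr p -> e1 = e2) /\
  (forall e1 e2 p, tgt G e1 = inr p -> tgt G e2 = inr p -> e1 = e2).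

Definition open_embedding {G H : pograph} (f : pomorph G H) : Prop :=
  (forall e1 e2, fE f e1 = fE f e2 -> e1 = e2) /\
  (forall v1 v2, fV f v1 = fV f v2 -> v1 = v2) /\
  (forall p1 p2, fP f p1 = fP f p2 -> p1 = p2) /\
  (forall (v : V G) (e : E H),
      (src H e = inl (fV f v) \/ tgt H e = inl (fV f v)) ->
      exists e', fE f e' = e).

Definition has_out (G : pograph) (p : P G) : Prop := exists e, src G e = inr p.
Definition has_in (G : pograph) (p : P G) : Prop := exists e, tgt G e = inr p.
Definition exactly_one_out (G : pograph) (p : P G) : Prop :=
  exists e, src G e = inr p /\ forall e', src G e' = inr p -> e' = e.
Definition exactly_one_in (G : pograph) (p : P G) : Prop :=
  exists e, tgt G e = inr p /\ forall e', tgt G e' = inr p -> e' = e.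

Definition is_input (G : pograph) (p : P G) : Prop :=
  exactly_one_out G p /\ ~ has_in G p.
Definition is_output (G : pograph) (p : P G) : Prop :=
  exactly_one_in G p /\ ~ has_out G p.
Definition is_isolated (G : pograph) (p : P G) : Prop :=
  ~ has_out G p /\ ~ has_in G p.
Definition is_boundary (G : pograph) (p : P G) : Prop :=
  is_input G p \/ is_output G p.

Definition boundary_coherent {G H1 H2 : pograph}
  (f : pomorph G H1) (g : pomorph G H2) : Prop :=
  (forall p : P G, is_boundary G p ->
     ~ is_boundary H1 (fP f p) -> is_boundary H2 (fP g p)) /\
  (forall p : P G, is_isolated G p ->
     is_isolated H1 (fP f p) \/ is_isolated H2 (fP g p) \/
     (is_input H1 (fP f p) /\ is_output H2 (fP g p)) \/
     (is_output H1 (fP f p) /\ is_input H2 (fP g p))).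

(* (M, i1, i2) is a pushout of e1, e2 in the full subcategory OGraph of open graphs. *)
Definition is_pushout_OGraph {K G1 G2 M : pograph}
  (e1 : pomorph K G1) (e2 : pomorph K G2)
  (i1 : pomorph G1 M) (i2 : pomorph G2 M) : Prop :=
  is_open M /\
  meq (comp i1 e1) (comp i2 e2) /\
  forall (Q : pograph) (q1 : pomorph G1 Q) (q2 : pomorph G2 Q),
    is_open Q -> meq (comp q1 e1) (comp q2 e2) ->
    exists u : pomorph M Q,
      meq (comp u i1) q1 /\ meq (comp u i2) q2 /\
      forall u' : pomorph M Q, meq (comp u' i1) q1 -> meq (comp u' i2) q2 -> meq u' u.

(* Main.v *)
Require Import Defs.
From Stdlib Require Import Classical ClassicalEpsilon ProofIrrelevance.

Lemma map_pt_id {A B} (x : A + B) : map_pt (fun v => v) (fun p => p) x = x.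
Proof. destruct x; reflexivity. Qed.

Lemma sig_eq' {A} (Pr : A -> Prop) (x y : {a | Pr a}) : proj1_sig x = proj1_sig y -> x = y.
Proof. destruct x, y; simpl; intros ->; f_equal; apply proof_irrelevance. Qed.

Definition glue {A B C} (f : A -> B) (g : A -> C) (b : B) :
  C + {b : B | ~ exists a, f a = b} :=
  match excluded_middle_informative (exists a, f a = b) with
  | left H => inl (g (proj1_sig (constructive_indefinite_description _ H)))
  | right H => inr (exist _ b H)
  end.

Lemma glue_in {A B C} (f : A -> B) (g : A -> C) a :
  (forall x y, f x = f y -> x = y) -> glue f g (f a) = inl (g a).
Proof.
  intro Hi. unfold glue. destruct excluded_middle_informative as [H|H].
  - destruct constructive_indefinite_description as [x Hx]; simpl. rewrite (Hi _ _ Hx). reflexivity.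
  - exfalso; apply H; eauto.
Qed.

Lemma glue_inv {A B C} (f : A -> B) (g : A -> C) b c :
  glue f g b = inl c -> exists a, f a = b /\ g a = c.
Proof.
  unfold glue. destruct excluded_middle_informative as [H|H]; [|discriminate].
  destruct constructive_indefinite_description as [x Hx]; simpl. intro E'; inversion E'; eauto.
Qed.

Lemma glue_out {A B C} (f : A -> B) (g : A -> C) b b' :
  glue f g b = inr b' -> proj1_sig b' = b.
Proof.
  unfold glue. destruct excluded_middle_informative as [H|H]; [discriminate|].
  intro E'; inversion E'; reflexivity.
Qed.

Lemma glue_inj {A B C} (f : A -> B) (g : A -> C) b b' :
  (forall x y, f x = f y -> x = y) -> (forall x y, g x = g y -> x = y) ->
  glue f g b = glue f g b' -> b = b'.
Proof.
  intros Hf Hg Heq. destruct (glue f g b) eqn:E1, (glue f g b') eqn:E2; try discriminate.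
  - inversion Heq; subst. apply glue_inv in E1 as [a [<- <-]]. apply glue_inv in E2 as [a' [<- Ha]].
    rewrite (Hg _ _ Ha). reflexivity.
  - inversion Heq; subst. rewrite <- (glue_out _ _ _ _ E1). apply (glue_out _ _ _ _ E2).
Qed.

Section Q.
Variables (K G1 G2 : pograph) (e1 : pomorph K G1) (e2 : pomorph K G2).

Definition gV := glue (fV e2) (fV e1).
Definition gP := glue (fP e2) (fP e1).
Definition gE := glue (fE e2) (fE e1).

Definition QG : pograph :=
  @POGraph (E G1 + {e : E G2 | ~ exists k, fE e2 k = e})
           (V G1 + {v : V G2 | ~ exists k, fV e2 k = v})
           (P G1 + {p : P G2 | ~ exists k, fP e2 k = p})
    (fun x => match x with inl a => map_pt inl inl (src G1 a)
                      | inr b => map_pt gV gP (src G2 (proj1_sig b)) end)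
    (fun x => match x with inl a => map_pt inl inl (tgt G1 a)
                      | inr b => map_pt gV gP (tgt G2 (proj1_sig b)) end).

Definition q1 : pomorph G1 QG.
Proof.
  refine (@POMorph G1 QG inl inl inl _ _); intro; reflexivity.
Defined.

Hypothesis oe1 : open_embedding e1.
Hypothesis oe2 : open_embedding e2.

Lemma gV_e2 k : gV (fV e2 k) = inl (fV e1 k).
Proof. apply glue_in. apply oe2. Qed.
Lemma gP_e2 k : gP (fP e2 k) = inl (fP e1 k).
Proof. apply glue_in. apply oe2. Qed.
Lemma gE_e2 k : gE (fE e2 k) = inl (fE e1 k).
Proof. apply glue_in. apply oe2. Qed.

Lemma map_pt_e2 x : map_pt gV gP (map_pt (fV e2) (fP e2) x) = map_pt inl inl (map_pt (fV e1) (fP e1) x).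
Proof. destruct x; simpl; [rewrite gV_e2|rewrite gP_e2]; reflexivity. Qed.

Definition q2 : pomorph G2 QG.
Proof.
  refine (@POMorph G2 QG gE gV gP _ _); intro e; simpl;
  destruct (gE e) eqn:H.
  - apply glue_inv in H as [k [<- <-]]. rewrite (fsrc e1), (fsrc e2). symmetry; apply map_pt_e2.
  - apply glue_out in H. rewrite H. reflexivity.
  - apply glue_inv in H as [k [<- <-]]. rewrite (ftgt e1), (ftgt e2). symmetry; apply map_pt_e2.
  - apply glue_out in H. rewrite H. reflexivity.
Defined.

End Q.
Section Open.
Variables (K G1 G2 : pograph) (e1 : pomorph K G1) (e2 : pomorph K G2).
Hypothesis oK : is_open K.
Hypothesis oG1 : is_open G1.
Hypothesis oG2 : is_open G2.
Hypothesis oe1 : open_embedding e1.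
Hypothesis oe2 : open_embedding e2.
Hypothesis bc : boundary_coherent e1 e2.

Lemma mixed_src a1 b2 k :
  src G1 a1 = inr (fP e1 k) -> src G2 b2 = inr (fP e2 k) ->
  ~ (exists c, fE e2 c = b2) -> False.
Proof.
  intros Ha Hb Hn.
  destruct (classic (has_out K k)) as [[c Hc]|Hno].
  { apply Hn. exists c. apply (proj1 oG2 _ _ (fP e2 k)); auto.
    rewrite (fsrc e2), Hc. reflexivity. }
  destruct (classic (has_in K k)) as [[c Hc]|Hni].
  - assert (Hbd : is_boundary K k).
    { right. split; auto. exists c. split; auto. intros e' He'.
      apply (proj2 oK _ _ k); auto. }
    assert (Hc2 : tgt G2 (fE e2 c) = inr (fP e2 k)) by (rewrite (ftgt e2), Hc; reflexivity).
    assert (Hc1 : tgt G1 (fE e1 c) = inr (fP e1 k)) by (rewrite (ftgt e1), Hc; reflexivity).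
    assert (Hnb : ~ is_boundary G1 (fP e1 k)).
    { intros [[_ Hi]|[_ Ho]]; [apply Hi; eexists; eauto | apply Ho; eexists; eauto]. }
    destruct (proj1 bc k Hbd Hnb) as [[_ Hi]|[_ Ho]]; [apply Hi; eexists; eauto | apply Ho; eexists; eauto].
  - destruct (proj2 bc k (conj Hno Hni)) as [[Ho _]|[[Ho _]|[[_ [_ Ho]]|[[_ Ho] _]]]];
      apply Ho; eexists; eauto.
Qed.

Lemma mixed_tgt a1 b2 k :
  tgt G1 a1 = inr (fP e1 k) -> tgt G2 b2 = inr (fP e2 k) ->
  ~ (exists c, fE e2 c = b2) -> False.
Proof.
  intros Ha Hb Hn.
  destruct (classic (has_in K k)) as [[c Hc]|Hni].
  { apply Hn. exists c. apply (proj2 oG2 _ _ (fP e2 k)); auto.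
    rewrite (ftgt e2), Hc. reflexivity. }
  destruct (classic (has_out K k)) as [[c Hc]|Hno].
  - assert (Hbd : is_boundary K k).
    { left. split; auto. exists c. split; auto. intros e' He'.
      apply (proj1 oK _ _ k); auto. }
    assert (Hc2 : src G2 (fE e2 c) = inr (fP e2 k)) by (rewrite (fsrc e2), Hc; reflexivity).
    assert (Hc1 : src G1 (fE e1 c) = inr (fP e1 k)) by (rewrite (fsrc e1), Hc; reflexivity).
    assert (Hnb : ~ is_boundary G1 (fP e1 k)).
    { intros [[_ Hi]|[_ Ho]]; [apply Hi; eexists; eauto | apply Ho; eexists; eauto]. }
    destruct (proj1 bc k Hbd Hnb) as [[_ Hi]|[_ Ho]]; [apply Hi; eexists; eauto | apply Ho; eexists; eauto].
  - destruct (proj2 bc k (conj Hno Hni)) as [[_ Ho]|[[_ Ho]|[[[_ Ho] _]|[_ [_ Ho]]]]];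
      apply Ho; eexists; eauto.
Qed.

Lemma inr_map_pt {A B C D} (f : A -> C + D) (g : B -> C + D) x p :
  match x with inl v => f v | inr q => g q end = inr p -> True.
Proof. auto. Qed.

Lemma QG_open : is_open (QG K G1 G2 e1 e2).
Proof.
  assert (gPi : forall x y, gP K G1 G2 e1 e2 x = gP K G1 G2 e1 e2 y -> x = y).
  { intros x y; apply glue_inj; [apply oe2 | apply oe1]. }
  split; intros [a|[b Hb]] [c|[d Hd]] p; simpl.
  - destruct (src G1 a) eqn:Ha; simpl; try discriminate.
    destruct (src G1 c) eqn:Hc; simpl; try discriminate.
    intros H1 H2; inversion H1; inversion H2; subst. f_equal. eapply (proj1 oG1); eauto.
    rewrite Hc; congruence.
  - destruct (src G1 a) eqn:Ha; simpl; try discriminate.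
    destruct (src G2 d) eqn:Hc; simpl; try discriminate.
    intros H1 H2; inversion H1; subst. unfold gP in H2. inversion H2 as [Hg]; clear H2.
    apply glue_inv in Hg as [k [<- <-]]. exfalso; eapply mixed_src; eauto.
  - destruct (src G2 b) eqn:Hc; simpl; try discriminate.
    destruct (src G1 c) eqn:Ha; simpl; try discriminate.
    intros H2 H1; inversion H1; subst. unfold gP in H2. inversion H2 as [Hg]; clear H2.
    apply glue_inv in Hg as [k [<- <-]]. exfalso; eapply mixed_src; eauto.
  - destruct (src G2 b) eqn:Hc; simpl; try discriminate.
    destruct (src G2 d) eqn:Ha; simpl; try discriminate.
    intros H1 H2. rewrite <- H2 in H1. inversion H1 as [H3]. apply gPi in H3. subst.
    f_equal. apply sig_eq'. simpl. eapply (proj1 oG2); eauto.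
  - destruct (tgt G1 a) eqn:Ha; simpl; try discriminate.
    destruct (tgt G1 c) eqn:Hc; simpl; try discriminate.
    intros H1 H2; inversion H1; inversion H2; subst. f_equal. eapply (proj2 oG1); eauto.
    rewrite Hc; congruence.
  - destruct (tgt G1 a) eqn:Ha; simpl; try discriminate.
    destruct (tgt G2 d) eqn:Hc; simpl; try discriminate.
    intros H1 H2; inversion H1; subst. unfold gP in H2. inversion H2 as [Hg]; clear H2.
    apply glue_inv in Hg as [k [<- <-]]. exfalso; eapply mixed_tgt; eauto.
  - destruct (tgt G2 b) eqn:Hc; simpl; try discriminate.
    destruct (tgt G1 c) eqn:Ha; simpl; try discriminate.
    intros H2 H1; inversion H1; subst. unfold gP in H2. inversion H2 as [Hg]; clear H2.
    apply glue_inv in Hg as [k [<- <-]]. exfalso; eapply mixed_tgt; eauto.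
  - destruct (tgt G2 b) eqn:Hc; simpl; try discriminate.
    destruct (tgt G2 d) eqn:Ha; simpl; try discriminate.
    intros H1 H2. rewrite <- H2 in H1. inversion H1 as [H3]. apply gPi in H3. subst.
    f_equal. apply sig_eq'. simpl. eapply (proj2 oG2); eauto.
Qed.
End Open.
Section Surj.
Variables (K G1 G2 M : pograph) (e1 : pomorph K G1) (e2 : pomorph K G2)
  (i1 : pomorph G1 M) (i2 : pomorph G2 M).

Definition img (e : E M) : Prop := (exists a, fE i1 a = e) \/ (exists b, fE i2 b = e).

Definition SG : pograph :=
  @POGraph {e : E M | img e} (V M) (P M)
    (fun e => src M (proj1_sig e)) (fun e => tgt M (proj1_sig e)).

Definition jS : pomorph SG M.
Proof.
  refine (@POMorph SG M (fun e => proj1_sig e) (fun v => v) (fun p => p) _ _);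
  intro; simpl; symmetry; apply map_pt_id.
Defined.

Definition s1 : pomorph G1 SG.
Proof.
  refine (@POMorph G1 SG (fun a => exist _ (fE i1 a) (or_introl (ex_intro _ a eq_refl)))
     (fV i1) (fP i1) _ _); intro; simpl; [apply (fsrc i1)|apply (ftgt i1)].
Defined.

Definition s2 : pomorph G2 SG.
Proof.
  refine (@POMorph G2 SG (fun a => exist _ (fE i2 a) (or_intror (ex_intro _ a eq_refl)))
     (fV i2) (fP i2) _ _); intro; simpl; [apply (fsrc i2)|apply (ftgt i2)].
Defined.

Definition idM : pomorph M M.
Proof.
  refine (@POMorph M M (fun e => e) (fun v => v) (fun p => p) _ _);
  intro; symmetry; apply map_pt_id.
Defined.

Lemma joint_surj : is_pushout_OGraph e1 e2 i1 i2 -> forall e, img e.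
Proof.
  intros [oM [cm UP]] e.
  assert (oS : is_open SG).
  { split; intros x y p Hx Hy; apply sig_eq'; simpl in *;
    [eapply (proj1 oM)|eapply (proj2 oM)]; eauto. }
  assert (cS : meq (comp s1 e1) (comp s2 e2)).
  { destruct cm as [cE [cV cP]]. split; [|split]; simpl; auto.
    intro; apply sig_eq'; simpl; apply cE. }
  destruct (UP SG s1 s2 oS cS) as [u0 [[u1E [u1V u1P]] [[u2E [u2V u2P]] _]]].
  simpl in u1E, u1V, u1P, u2E, u2V, u2P.
  destruct (UP M i1 i2 oM cm) as [uM [_ [_ Uq]]].
  assert (H1 : meq (comp jS u0) uM).
  { apply Uq; split; try split; simpl; intro x;
    first [rewrite u1E | rewrite u1V | rewrite u1P | rewrite u2E | rewrite u2V | rewrite u2P];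
    reflexivity. }
  assert (H2 : meq idM uM).
  { apply Uq; split; try split; simpl; reflexivity. }
  destruct H1 as [H1 _], H2 as [H2 _]. simpl in H1, H2.
  rewrite (H2 e), <- H1. apply proj2_sig.
Qed.
End Surj.
Theorem corollary1 (K G1 G2 M : pograph)
  (e1 : pomorph K G1) (e2 : pomorph K G2)
  (i1 : pomorph G1 M) (i2 : pomorph G2 M) :
  is_open K -> is_open G1 -> is_open G2 ->
  open_embedding e1 -> open_embedding e2 ->
  boundary_coherent e1 e2 ->
  is_pushout_OGraph e1 e2 i1 i2 ->
  open_embedding i1 /\ open_embedding i2.
Proof.
  intros oK oG1 oG2 oe1 oe2 bc PO.
  pose proof (@joint_surj K G1 G2 M e1 e2 i1 i2 PO) as JS.
  destruct PO as [oM [cm UP]].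
  assert (cQ : meq (comp (q1 K G1 G2 e1 e2) e1) (comp (q2 K G1 G2 e1 e2 oe2) e2)).
  { split; [|split]; intro x; simpl; symmetry;
    [apply gE_e2 | apply gV_e2 | apply gP_e2]; auto. }
  destruct (UP _ _ _ (@QG_open K G1 G2 e1 e2 oK oG1 oG2 oe1 oe2 bc) cQ)
    as [u [[u1E [u1V u1P]] [[u2E [u2V u2P]] _]]].
  simpl in u1E, u1V, u1P, u2E, u2V, u2P.
  destruct cm as [cE [cV cP]]; simpl in cE, cV, cP.
  assert (ginj : forall A B C (f : A -> B) (g : A -> C) x y,
            (forall x y, f x = f y -> x = y) -> (forall x y, g x = g y -> x = y) ->
            glue f g x = glue f g y -> x = y) by (intros; eapply glue_inj; eauto).
  destruct oe1 as [i1E [i1V [i1P f1]]].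
  destruct oe2 as [i2E [i2V [i2P f2]]].
  split; split; [| split; [| split] | | split; [| split]].
  - intros x y H. apply (f_equal (fE u)) in H. rewrite !u1E in H. congruence.
  - intros x y H. apply (f_equal (fV u)) in H. rewrite !u1V in H. congruence.
  - intros x y H. apply (f_equal (fP u)) in H. rewrite !u1P in H. congruence.
  - intros v e He. destruct (JS e) as [[a Ha]|[b Hb]]; [eauto|]. subst e.
    assert (Hw : exists w, (src G2 b = inl w \/ tgt G2 b = inl w) /\ fV i2 w = fV i1 v).
    { rewrite (fsrc i2), (ftgt i2) in He.
      destruct He as [He|He]; [destruct (src G2 b) eqn:Hs | destruct (tgt G2 b) eqn:Hs];
      simpl in He; try discriminate; inversion He; eauto. }
    destruct Hw as [w [Hsw Hw]].
    apply (f_equal (fV u)) in Hw. rewrite u1V, u2V in Hw.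
    apply glue_inv in Hw as [k [Hk1 Hk2]]. subst w.
    destruct (f2 k b) as [c Hc]; [tauto|]. subst b. exists (fE e1 c). auto.
  - intros x y H. apply (f_equal (fE u)) in H. rewrite !u2E in H.
    eapply glue_inj; [| | exact H]; auto.
  - intros x y H. apply (f_equal (fV u)) in H. rewrite !u2V in H.
    eapply glue_inj; [| | exact H]; auto.
  - intros x y H. apply (f_equal (fP u)) in H. rewrite !u2P in H.
    eapply glue_inj; [| | exact H]; auto.
  - intros v e He. destruct (JS e) as [[a Ha]|[b Hb]]; [|eauto]. subst e.
    assert (Hw : exists w, (src G1 a = inl w \/ tgt G1 a = inl w) /\ fV i1 w = fV i2 v).
    { rewrite (fsrc i1), (ftgt i1) in He.
      destruct He as [He|He]; [destruct (src G1 a) eqn:Hs | destruct (tgt G1 a) eqn:Hs];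
      simpl in He; try discriminate; inversion He; eauto. }
    destruct Hw as [w [Hsw Hw]].
    apply (f_equal (fV u)) in Hw. rewrite u1V, u2V in Hw. symmetry in Hw.
    apply glue_inv in Hw as [k [Hk1 Hk2]]. subst v. simpl in Hk2. inversion Hk2; subst w.
    destruct (f1 k a) as [c Hc]; [tauto|]. subst a. exists (fE e2 c). auto.
Qed.
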